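(* Let $\varepsilon\in[0,1)$ and $\mathcal{P},\mathcal{E}\subseteq\mathcal{D}(P)$. Then $$\beta C_{\mathrm{GPO},\varepsilon}(\mathcal{P},\mathcal{E})=D_{\max,\varepsilon}(\mathcal{P}\|\mathcal{E}).$$
   Context: All Hilbert spaces are finite-dimensional; $\mathcal{D}(P)$ is the set of density operators on $P$; $T(X,Y)=\tfrac12\|X-Y\|_1$; $\mathcal{B}_\varepsilon(\mathcal{P})=\{\omega\in\mathcal{D}:T(\omega,\rho)\le\varepsilon\text{ for some }\rho\in\mathcal{P}\}$. Battery: qubit $B$ with basis $\{|0\rangle,|1\rangle\}$, $\pi_M=(1-\tfrac1M)|0\rangle\langle0|+\tfrac1M|1\rangle\langle1|$ for $M>1$. The one-shot work cost from a clean battery under a class $\mathfrak{F}$ is $\beta C_{\mathfrak{F},\varepsilon}(\mathcal{P},\mathcal{E})=\log\inf\{M>1:\exists\mathcal{F}\in\mathfrak{F},\ \exists(\rho,\tau)\in\mathcal{P}\times\mathcal{E}\text{ with }T(\mathcal{F}(|1\rangle\langle1|),\rho)\le\varepsilon\text{ and }\mathcal{F}(\pi_M)=\tau\}$. GPO here means the class of CPTP maps from $B$ to $P$, Gibbs preservation being the condition $\mathcal{F}(\pi_M)=\tau$. The smoothed max-relative entropy between sets is $D_{\max,\varepsilon}(\mathcal{P}\|\mathcal{E})=\log\inf\{M>1:\tau\in\mathcal{E},\ \omega\in\mathcal{B}_\varepsilon(\mathcal{P}),\ M\tau-\omega\ge0\}$. *)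

(* Defs.v *)
From HB Require Import structures.
From mathcomp Require Import all_boot all_order all_algebra.
From mathcomp Require Import all_classical all_reals.
From mathcomp Require Import ereal exp.
From mathcomp.real_closed Require Import complex mxtens.

Set Implicit Arguments.
Unset Strict Implicit.
Unset Printing Implicit Defensive.

Import Order.TTheory GRing.Theory Num.Theory.
Local Open Scope ring_scope.
Local Open Scope complex_scope.
Local Open Scope classical_set_scope.

Section QDefs.
Variable R : realType.
Local Notation C := R[i].

Definition hadj m n (A : 'M[C]_(m, n)) : 'M[C]_(n, m) := (map_mx Num.conj A)^T.

Definition psd n (A : 'M[C]_n) : Prop :=
  hadj A = A /\ forall v : 'cV[C]_n, 0 <= (hadj v *m A *m v) 0 0.

Definition density n : set 'M[C]_n := [set rho | psd rho /\ \tr rho = 1].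

(* ||X||_1 = tr sqrt(X^* X), where sqrt is the (unique) PSD square root *)
Definition is_trnorm n (X : 'M[C]_n) (t : R) : Prop :=
  exists S : 'M[C]_n, psd S /\ S *m S = hadj X *m X /\ t = complex.Re (\tr S).

Definition trnorm n (X : 'M[C]_n) : R := xget 0 [set t : R | is_trnorm X t].

Definition tdist n (X Y : 'M[C]_n) : R := trnorm (X - Y) / 2.

Definition ball_eps n (eps : R) (Pset : set 'M[C]_n) : set 'M[C]_n :=
  [set w | @density n w /\ exists2 rho, Pset rho & tdist w rho <= eps].

(* id_k (x) F applied to X : 'M_(k*m), using the Kronecker index (i,a) |-> i*m + a *)
Definition ampl k m n (F : 'M[C]_m -> 'M[C]_n) (X : 'M[C]_(k * m)) : 'M[C]_(k * n) :=
  \matrix_(a, b)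
     (F (\matrix_(r, s) X (mxtens_index ((mxtens_unindex a).1, r))
                          (mxtens_index ((mxtens_unindex b).1, s))))
       (mxtens_unindex a).2 (mxtens_unindex b).2.

Definition CPTP m n (F : 'M[C]_m -> 'M[C]_n) : Prop :=
  [/\ linear F,
      (forall k (X : 'M[C]_(k * m)), psd X -> psd (ampl F X)) &
      forall X, \tr (F X) = \tr X].

(* battery: qubit; |1><1| and pi_M *)
Definition ket1bra1 : 'M[C]_2 := delta_mx 1 1.
Definition piM (M : R) : 'M[C]_2 :=
  (1 - M^-1)%:C *: delta_mx 0 0 + (M^-1)%:C *: delta_mx 1 1.

(* logarithm extended to \bar R (only applied to values >= 1 or +oo) *)
Definition elog (x : \bar R) : \bar R :=
  match x with
  | EFin r => EFin (ln r)
  | +oo%E => +oo%E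
  | -oo%E => -oo%E
  end.

(* beta C_{GPO,eps}(P, E): GPO = all CPTP maps B -> P, Gibbs preservation F(pi_M) = tau *)
Definition workcost_GPO n (eps : R) (Pset Eset : set 'M[C]_n) : \bar R :=
  elog (ereal_inf [set x | exists M : R, x = M%:E /\ 1 < M /\
     exists F : 'M[C]_2 -> 'M[C]_n, CPTP F /\
     exists rho tau, Pset rho /\ Eset tau /\
       tdist (F ket1bra1) rho <= eps /\ F (piM M) = tau]).

Definition Dmax_eps n (eps : R) (Pset Eset : set 'M[C]_n) : \bar R :=
  elog (ereal_inf [set x | exists M : R, x = M%:E /\ 1 < M /\
     exists tau w, Eset tau /\ ball_eps eps Pset w /\ psd (M%:C *: tau - w)]).

End QDefs.
Arguments density {R} n.

(* Main.v *)
Require Import Defs.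
From mathcomp Require Import all_boot all_order all_algebra.
From mathcomp Require Import all_classical all_reals.
From mathcomp Require Import ereal exp.
From mathcomp.real_closed Require Import complex mxtens.
From mathcomp Require Import spectral sesquilinear.
From mathcomp.algebra_tactics Require Import ring.
Set Implicit Arguments.
Unset Strict Implicit.
Unset Printing Implicit Defensive.
Import Order.TTheory GRing.Theory Num.Theory.
Local Open Scope ring_scope.
Local Open Scope classical_set_scope.

Ltac sh := match goal with |- ?g => idtac g end.
Section Helpers.
Variable R : realType.
Local Notation C := R[i].

Lemma hadjE m n (A : 'M[C]_(m, n)) i j : hadj A i j = Num.conj (A j i).
Proof. by rewrite /hadj !mxE. Qed.

Lemma hadjK m n (A : 'M[C]_(m, n)) : hadj (hadj A) = A.
Proof. by apply/matrixP => i j; rewrite !hadjE conjCK. Qed.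

Lemma hadj_mul m n p (A : 'M[C]_(m, n)) (B : 'M[C]_(n, p)) :
  hadj (A *m B) = hadj B *m hadj A.
Proof.
apply/matrixP => i j; rewrite hadjE !mxE rmorph_sum; apply: eq_bigr => k _.
by rewrite rmorphM !hadjE mulrC.
Qed.

Lemma hadj_tens m n p q (A : 'M[C]_(m, n)) (B : 'M[C]_(p, q)) :
  hadj (A *t B) = hadj A *t hadj B.
Proof. by apply/matrixP => i j; rewrite hadjE !mxE rmorphM. Qed.

Lemma psd_gram m n (L : 'M[C]_(m, n)) : psd (hadj L *m L).
Proof.
split; first by rewrite hadj_mul hadjK.
move=> v; have -> : hadj v *m (hadj L *m L) *m v = hadj (L *m v) *m (L *m v) by rewrite hadj_mul !mulmxA.
rewrite mxE; apply: sumr_ge0 => i _; rewrite hadjE mulrC; exact: mul_conjC_ge0.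
Qed.

Lemma psd_add n (A B : 'M[C]_n) : psd A -> psd B -> psd (A + B).
Proof.
move=> [hA qA] [hB qB]; split.
  have -> : hadj (A + B) = hadj A + hadj B.
    by apply/matrixP => i j; rewrite !mxE rmorphD.
  by rewrite hA hB.
by move=> v; rewrite mulmxDr mulmxDl mxE addr_ge0.
Qed.

Lemma hermsym_of n (A : 'M[C]_n) : hadj A = A -> A \is hermsymmx.
Proof.
move=> hA; apply/is_hermitianmxP; rewrite expr0 scale1r.
by rewrite -[LHS]hA /hadj map_trmx.
Qed.

Lemma psd_factor n (A : 'M[C]_n) : psd A -> exists L : 'M[C]_n, A = hadj L *m L.
Proof.
move=> [hA qA].
have /orthomx_spectralP := hermitian_normalmx (hermsym_of hA).
set P := spectralmx A; set sp := spectral_diag A => EA.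
have PU := spectral_unitarymx A; rewrite -/P in PU.
have hP : invmx P = hadj P.
  by rewrite invmx_unitary // /hadj map_trmx.
have PP : P *m hadj P = 1%:M by rewrite -hP mulmxV // unitarymx_unit.
have ED : P *m A *m hadj P = diag_mx sp.
  by rewrite EA hP !mulmxA PP mul1mx -!mulmxA PP mulmx1.
have sp0 : forall j, 0 <= sp 0 j.
  move=> j; have := qA (col j (hadj P)).
  suff -> : (hadj (col j (hadj P)) *m A *m col j (hadj P)) 0 0 = sp 0 j by [].
  have -> : sp 0 j = diag_mx sp j j by rewrite mxE eqxx mulr1n.
  rewrite -ED !mxE; apply: eq_bigr => k _; rewrite !mxE; congr (_ * _).
  apply: eq_bigr => l _; rewrite !mxE.
  by rewrite conjCK.
pose d := \row_j sqrtC (sp 0 j).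
exists (diag_mx d *m P).
have hd : hadj (diag_mx d) = diag_mx d.
  apply/matrixP => i j; rewrite hadjE !mxE.
  case: (eqVneq i j) => [->|ij]; last by rewrite !mulr0n rmorph0.
  by rewrite !mulr1n geC0_conj // sqrtC_ge0.
rewrite hadj_mul hd mulmxA -(mulmxA (hadj P)) mulmx_diag EA hP.
congr (_ *m diag_mx _ *m _); apply/rowP => j; rewrite !mxE -expr2 sqrtCK //.
Qed.

Lemma psd_tens m n (A : 'M[C]_m) (B : 'M[C]_n) : psd A -> psd B -> psd (A *t B).
Proof.
move=> /psd_factor [L ->] /psd_factor [N ->].
by rewrite -tensmx_mul -hadj_tens; apply: psd_gram.
Qed.

Lemma psd_sub m n (A : 'M[C]_m) (f : 'I_n -> 'I_m) :
  psd A -> psd (\matrix_(i, j) A (f i) (f j)).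
Proof.
move=> /psd_factor [L ->].
have -> : \matrix_(i, j) (hadj L *m L) (f i) (f j) =
   hadj (\matrix_(r, j) L r (f j)) *m (\matrix_(r, j) L r (f j)).
  apply/matrixP => i j; rewrite !mxE; apply: eq_bigr => k _.
  by rewrite !hadjE !mxE.
exact: psd_gram.
Qed.

Lemma psd_scale n (c : C) (A : 'M[C]_n) : 0 <= c -> psd A -> psd (c *: A).
Proof.
move=> c0 [hA qA]; split.
  have -> : hadj (c *: A) = Num.conj c *: hadj A.
    by apply/matrixP => i j; rewrite !mxE rmorphM.
  by rewrite geC0_conj // hA.
move=> v; rewrite -scalemxAr -scalemxAl mxE; exact: mulr_ge0.
Qed.

Lemma psd_delta n (x : 'I_n) : psd (delta_mx x x : 'M[C]_n).
Proof.
have -> : (delta_mx x x : 'M[C]_n) = hadj (delta_mx 0 x : 'M[C]_(1, n)) *m delta_mx 0 x.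
  have -> : hadj (delta_mx 0 x : 'M[C]_(1, n)) = delta_mx x 0.
    apply/matrixP => i j; rewrite hadjE !mxE.
    by case: (_ == _); case: (_ == _); rewrite /= ?rmorph1 ?rmorph0.
  by rewrite mul_delta_mx.
exact: psd_gram.
Qed.

Local Open Scope complex_scope.

Lemma lin_facts m n (F : 'M[C]_m -> 'M[C]_n) : linear F ->
  (forall a u, F (a *: u) = a *: F u) /\ (forall u v, F (u - v) = F u - F v).
Proof.
move=> HF.
have F0 : F 0 = 0.
  have E := HF 1 0 0; rewrite !scale1r addr0 in E.
  have : F 0 - F 0 = F 0 + F 0 - F 0 by rewrite -E.
  by rewrite subrr addrK.
have FZ : forall a u, F (a *: u) = a *: F u.
  by move=> a u; have := HF a u 0; rewrite !addr0 F0 addr0.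
split => // u v; have := HF (-1) v u; rewrite !scaleN1r => E.
by rewrite [u - v]addrC E addrC.
Qed.

Lemma cp1 m n (F : 'M[C]_m -> 'M[C]_n) : CPTP F -> forall Y, psd Y -> psd (F Y).
Proof.
case=> _ HCP _ Y HY.
pose X : 'M[C]_(1 * m) := \matrix_(a, b) Y (mxtens_unindex a).2 (mxtens_unindex b).2.
have HX : psd X := psd_sub (fun a => (mxtens_unindex a).2) HY.
have := psd_sub (fun i : 'I_n => mxtens_index ((ord0 : 'I_1), i)) (HCP 1%N X HX).
congr psd; apply/matrixP => i j; rewrite /ampl !mxE !mxtens_indexK /=.
congr (F _ _ _); apply/matrixP => r s; rewrite !mxE !mxtens_indexK //.
Qed.

Lemma piM_ket (M : R) : 1 < M ->
  M%:C *: piM M - ket1bra1 R = (M - 1)%:C *: delta_mx 0 0 :> 'M[C]_2.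
Proof.
move=> HM; have M0 : M != 0 := lt0r_neq0 (lt_trans ltr01 HM).
rewrite /piM /ket1bra1 scalerDr !scalerA -!rmorphM.
have -> : M * (1 - M^-1) = M - 1 by rewrite mulrBr mulr1 divff.
by rewrite divff // rmorph1 scale1r addrK.
Qed.

End Helpers.

Theorem theorem5 (R : realType) (n : nat) (eps : R)
  (Pset Eset : set 'M[R[i]]_n) :
  0 <= eps -> eps < 1 ->
  Pset `<=` density n -> Eset `<=` density n ->
  workcost_GPO eps Pset Eset = Dmax_eps eps Pset Eset.
Proof.
Local Open Scope complex_scope.
move=> _ _ _ HE.
rewrite /workcost_GPO /Dmax_eps; congr (elog (ereal_inf _)).
apply/seteqP; split => x /= [M [-> [HM H]]]; exists M; split => //; split => //.
- case: H => F [HF [rho [tau [Prho [Et [Hd Ft]]]]]].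
  have [FZ FB] := lin_facts (let: And3 l _ _ := HF in l).
  exists tau, (F (ket1bra1 R)); split => //; split.
    split; last by exists rho.
    split; first exact: (cp1 HF (psd_delta _ _)).
    case: HF => _ _ ->; rewrite /ket1bra1 /mxtrace.
    rewrite (bigD1 1) //= !mxE eqxx /= big1 ?addr0 // => i /negbTE ne.
    by rewrite mxE ne.
  rewrite -Ft -FZ -FB (piM_ket HM) FZ.
  apply: psd_scale; first by rewrite ler0c subr_ge0 ltW.
  exact: (cp1 HF (psd_delta _ _)).
- case: H => tau [w [Et [[[Hw trw] [rho Prho Hd]] Hpsd]]].
  have trt : \tr tau = 1 by have [_ ->] := HE _ Et.
  have M0 : M != 0 := lt0r_neq0 (lt_trans ltr01 HM).
  have M10 : M - 1 != 0 by rewrite subr_eq0 gt_eqF.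
  pose s := ((M - 1)^-1)%:C *: (M%:C *: tau - w).
  have Hs : psd s.
    apply: psd_scale => //; rewrite ler0c invr_ge0 subr_ge0 ltW //.
  have trs : \tr s = 1.
    rewrite /s; rewrite linearZ /= linearB /= linearZ /= trt trw mulr1.
    by rewrite -(rmorph1 (real_complex R)) -rmorphB -rmorphM mulVf.
  exists (fun X : 'M[R[i]]_2 => X 1 1 *: w + X 0 0 *: s).
  split; first split.
  + move=> a u v /=; rewrite !mxE !scalerDl scalerDr !scalerA addrACA //.
  + move=> k X HX.
    have -> : ampl (fun X : 'M[R[i]]_2 => X 1 1 *: w + X 0 0 *: s) X =
      (\matrix_(i, j) X (mxtens_index (i, 1)) (mxtens_index (j, 1))) *t w +
      (\matrix_(i, j) X (mxtens_index (i, 0)) (mxtens_index (j, 0))) *t s.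
      by apply/matrixP => a b; rewrite !mxE.
    apply: psd_add; apply: psd_tens => //.
      exact: (psd_sub (fun i : 'I_k => mxtens_index (i, 1)) HX).
    exact: (psd_sub (fun i : 'I_k => mxtens_index (i, 0)) HX).
  + move=> X; rewrite mxtraceD (mxtraceZ (X 1 1) w) (mxtraceZ (X 0 0) s) trw trs !mulr1.
    rewrite /mxtrace big_ord_recl big_ord1 addrC.
    by have -> : lift ord0 ord0 = 1 :> 'I_2 by apply/val_inj.
  exists rho, tau; split => //; split => //; split.
    by rewrite /ket1bra1 !mxE /= scale1r scale0r addr0.
  rewrite /piM !mxE /= /s.
  rewrite !mulr0 !mulr1 add0r addr0 !scalerBr !scalerA -!rmorphM.
  have e2 : (1 - M^-1) * (M - 1)^-1 = M^-1.
    by field; rewrite M0 M10.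
  have e1 : (1 - M^-1) * (M - 1)^-1 * M = 1 by rewrite e2 mulVf.
  by rewrite e1 e2 rmorph1 scale1r addrC subrK.
Qed.
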